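(* Let $\Lambda>0$, $e>0$, $\phi_h>0$, and let $f:[0,\phi_h]\to(0,1]$ be strictly concave, strictly decreasing and differentiable with $f(0)=1$. Assume $2e/\Lambda\in f([0,\phi_h])$ and set $\underline{\phi}:=f^{-1}(2e/\Lambda)$, and let $\phi_{fp}:=\arg\max_{\phi\in[0,\phi_h]} f(\phi)\phi$. Define the limit matching revenue $$\tilde{\mathcal M}(\phi)=\begin{cases} e\phi & \text{if } \frac{e}{(\Lambda/2) f(\phi)}<1,\\ \frac{\Lambda}{2}f(\phi)\phi & \text{otherwise,}\end{cases}\qquad \phi\in[0,\phi_h].$$ Then $\tilde{\mathcal M}$ has a unique maximizer on $[0,\phi_h]$, given by $\phi^*=\max\{\phi_{fp},\underline{\phi}\}$. Moreover, for $\beta>0$ let $$\mathcal M(\phi;\beta)=\frac{\Lambda}{2}f(\phi)\phi\,\bigl(1-\mathcal D(\phi;\beta)\bigr),\qquad \mathcal D(\phi;\beta)=\Bigl(\sum_{n=0}^\infty \frac{e^n}{\prod_{a=1}^n\bigl(\frac{\Lambda}{2}f(\phi)+a\beta\bigr)}\Bigr)^{-1};$$ then for any sequence $\beta_n\downarrow 0$ and any choice of maximizers $\phi_n^*\in\arg\max_{\phi\in[0,\phi_h]}\mathcal M(\phi;\beta_n)$, there is a subsequence of $(\phi_n^* )$ converging to $\phi^*$.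
   Context: Model (monopoly): a single ride-hailing platform receives passengers as a Poisson process of rate $\Lambda/2$. Drivers arrive as a Poisson process of rate $\eta$ and wait in an FCFS queue. When a passenger arrives and at least one driver waits, the passenger is quoted the static price $\phi\in[0,\phi_h]$ and accepts with probability $f(\phi)$ (then immediately starting a ride with the head-of-line driver); otherwise the passenger is lost. Each waiting driver abandons independently after an exponential time of rate $\beta$; rides and post-abandonment breaks last exponential times of rate $\nu$, after which the driver rejoins the waiting queue with probability $p\in[0,1)$ and leaves otherwise. Here $e=\eta/(1-p)$. $\mathcal D(\phi;\beta)$ is the stationary probability that no driver is waiting and $\mathcal M(\phi;\beta)$ is the long-run rate of revenue (sum of accepted prices per unit time). $\tilde{\mathcal M}$ is the limit of $\mathcal M(\cdot;\beta)$ as $\beta\to 0$. *)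

(* Defs.v *)
From Stdlib Require Import Reals Lra.
From Coquelicot Require Import Coquelicot.
Open Scope R_scope.

Definition in_I (a b x : R) : Prop := a <= x <= b.

Definition strictly_concave_on (f : R -> R) (a b : R) : Prop :=
  forall x y t, in_I a b x -> in_I a b y -> x <> y -> 0 < t < 1 ->
    t * f x + (1 - t) * f y < f (t * x + (1 - t) * y).

Definition strictly_decreasing_on (f : R -> R) (a b : R) : Prop :=
  forall x y, in_I a b x -> in_I a b y -> x < y -> f y < f x.

Definition differentiable_on (f : R -> R) (a b : R) : Prop :=
  forall x, in_I a b x -> exists l : R,
    forall eps, 0 < eps -> exists delta, 0 < delta /\
      forall y, in_I a b y -> y <> x -> Rabs (y - x) < delta ->
        Rabs ((f y - f x) / (y - x) - l) < eps.

Definition is_argmax (g : R -> R) (a b x : R) : Prop :=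
  in_I a b x /\ forall y, in_I a b y -> g y <= g x.

Definition Mtilde (Lam e : R) (f : R -> R) (phi : R) : R :=
  if Rlt_dec (e / ((Lam / 2) * f phi)) 1 then e * phi
  else (Lam / 2) * f phi * phi.

Fixpoint rate_prod (c beta : R) (n : nat) : R :=
  match n with
  | O => 1
  | S m => rate_prod c beta m * (c + INR (S m) * beta)
  end.

Definition Dprob (Lam e : R) (f : R -> R) (phi beta : R) : R :=
  / Series (fun n => e ^ n / rate_prod ((Lam / 2) * f phi) beta n).

Definition Mrev (Lam e : R) (f : R -> R) (phi beta : R) : R :=
  (Lam / 2) * f phi * phi * (1 - Dprob Lam e f phi beta).

(* Main.v *)
Require Import Defs.
From Stdlib Require Import Reals Lra Lia.
From Coquelicot Require Import Coquelicot.
Open Scope R_scope.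

Lemma div_lt1 a b : 0 < b -> a < b -> a / b < 1.
Proof. intros. apply (proj1 (Rdiv_lt_1 a b H)); auto. Qed.

Lemma g_conc (f : R -> R) (phih : R)
  (hfrange : forall x, in_I 0 phih x -> 0 < f x <= 1)
  (hconc : strictly_concave_on f 0 phih)
  (hdec : strictly_decreasing_on f 0 phih) :
  strictly_concave_on (fun p => f p * p) 0 phih.
Proof.
  intros x y t Hx Hy Hxy Ht. unfold in_I in *.
  assert (Hf := hconc x y t Hx Hy Hxy Ht). simpl in Hf.
  set (m := t * x + (1 - t) * y) in *.
  assert (Hm : 0 < m).
  { unfold m. destruct (Rlt_le_dec 0 x); destruct (Rlt_le_dec 0 y); nra. }
  assert (H : (f x - f y) * (x - y) <= 0).
  { destruct (Rlt_le_dec x y) as [l|l].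
    - assert (f y < f x) by (apply hdec; unfold in_I; lra). nra.
    - assert (y < x) by lra. assert (f x < f y) by (apply hdec; unfold in_I; lra). nra. }
  assert (H2 : (t * f x + (1 - t) * f y) * m < f m * m) by (apply Rmult_lt_compat_r; lra).
  assert (H3 : (t * f x + (1 - t) * f y) * m
     = t * (f x * x) + (1 - t) * (f y * y) - t * (1 - t) * ((f x - f y) * (x - y))).
  { unfold m; ring. }
  assert (0 <= t * (1 - t)) by nra.
  assert (t * (1 - t) * ((f x - f y) * (x - y)) <= 0) by nra.
  lra.
Qed.

Lemma g_inc (g : R -> R) (phih phifp : R)
  (hc : strictly_concave_on g 0 phih)
  (hmax : is_argmax g 0 phih phifp) :
  forall x y, in_I 0 phih x -> in_I 0 phih y -> x < y -> y <= phifp -> g x < g y.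
Proof.
  intros x y Hx Hy Hxy Hyp. destruct hmax as [Hp Hm]. unfold in_I in *.
  destruct (Rlt_le_dec y phifp) as [l|l].
  - set (t := (phifp - y) / (phifp - x)).
    assert (Ht : 0 < t < 1).
    { unfold t; split.
      - apply Rdiv_lt_0_compat; lra.
      - apply div_lt1; lra. }
    assert (Hyeq : t * x + (1 - t) * phifp = y).
    { unfold t; field; lra. }
    assert (H := hc x phifp t Hx Hp ltac:(lra) Ht). rewrite Hyeq in H.
    assert (g x <= g phifp) by (apply Hm; unfold in_I; lra). nra.
  - assert (y = phifp) by lra. subst y.
    assert (H := hc x phifp (1/2) Hx Hp ltac:(lra) ltac:(lra)).
    assert (g (1 / 2 * x + (1 - 1 / 2) * phifp) <= g phifp) by (apply Hm; unfold in_I; lra).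
    lra.
Qed.

Lemma g_dec (g : R -> R) (phih phifp : R)
  (hc : strictly_concave_on g 0 phih)
  (hmax : is_argmax g 0 phih phifp) :
  forall x y, in_I 0 phih x -> in_I 0 phih y -> y < x -> phifp <= y -> g x < g y.
Proof.
  intros x y Hx Hy Hxy Hyp. destruct hmax as [Hp Hm]. unfold in_I in *.
  destruct (Rlt_le_dec phifp y) as [l|l].
  - set (t := (y - phifp) / (x - phifp)).
    assert (Ht : 0 < t < 1).
    { unfold t; split.
      - apply Rdiv_lt_0_compat; lra.
      - apply div_lt1; lra. }
    assert (Hyeq : t * x + (1 - t) * phifp = y).
    { unfold t; field; lra. }
    assert (H := hc x phifp t Hx Hp ltac:(lra) Ht). rewrite Hyeq in H.
    assert (g x <= g phifp) by (apply Hm; unfold in_I; lra). nra.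
  - assert (y = phifp) by lra. subst y.
    assert (H := hc x phifp (1/2) Hx Hp ltac:(lra) ltac:(lra)).
    assert (g (1 / 2 * x + (1 - 1 / 2) * phifp) <= g phifp) by (apply Hm; unfold in_I; lra).
    lra.
Qed.

Lemma Mt_lt (Lam e phih : R) (f : R -> R) (hLam : 0 < Lam)
  (hfrange : forall x, in_I 0 phih x -> 0 < f x <= 1)
  (hdec : strictly_decreasing_on f 0 phih)
  (phil : R) (hphil : in_I 0 phih phil) (hfphil : f phil = 2 * e / Lam) :
  forall phi, in_I 0 phih phi -> phi < phil -> Mtilde Lam e f phi = e * phi.
Proof.
  intros phi Hp Hl. unfold Mtilde.
  destruct (Rlt_dec (e / (Lam / 2 * f phi)) 1) as [_|n]; [reflexivity|exfalso; apply n].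
  assert (f phil < f phi) by (apply hdec; auto).
  assert (0 < f phi) by (apply hfrange; auto).
  apply div_lt1; [nra|].
  assert (e = Lam / 2 * f phil) by (rewrite hfphil; field; lra). nra.
Qed.

Lemma Mt_ge (Lam e phih : R) (f : R -> R) (hLam : 0 < Lam)
  (hfrange : forall x, in_I 0 phih x -> 0 < f x <= 1)
  (hdec : strictly_decreasing_on f 0 phih)
  (phil : R) (hphil : in_I 0 phih phil) (hfphil : f phil = 2 * e / Lam) :
  forall phi, in_I 0 phih phi -> phil <= phi -> Mtilde Lam e f phi = Lam / 2 * f phi * phi.
Proof.
  intros phi Hp Hl. unfold Mtilde.
  destruct (Rlt_dec (e / (Lam / 2 * f phi)) 1) as [r|_]; [exfalso|reflexivity].
  assert (f phi <= f phil).
  { destruct (Req_dec phil phi) as [->|]; [lra|]. left; apply hdec; auto; lra. }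
  assert (0 < f phi) by (apply hfrange; auto).
  apply Rdiv_lt_1 in r; [|nra].
  assert (e = Lam / 2 * f phil) by (rewrite hfphil; field; lra). nra.
Qed.

Lemma unimodal
  (Lam e phih : R) (f : R -> R)
  (hLam : 0 < Lam) (he : 0 < e) (hphih : 0 < phih)
  (hfrange : forall x, in_I 0 phih x -> 0 < f x <= 1)
  (hconc : strictly_concave_on f 0 phih)
  (hdec : strictly_decreasing_on f 0 phih)
  (phil : R) (hphil : in_I 0 phih phil) (hfphil : f phil = 2 * e / Lam)
  (phifp : R) (hphifp : is_argmax (fun phi => f phi * phi) 0 phih phifp) :
  (forall x y, in_I 0 phih x -> in_I 0 phih y -> x < y -> y <= Rmax phifp phil ->
     Mtilde Lam e f x < Mtilde Lam e f y) /\
  (forall x y, in_I 0 phih x -> in_I 0 phih y -> y < x -> Rmax phifp phil <= y ->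
     Mtilde Lam e f x < Mtilde Lam e f y).
Proof.
  assert (hg := g_conc f phih hfrange hconc hdec).
  assert (ginc := g_inc _ phih phifp hg hphifp).
  assert (gdec := g_dec _ phih phifp hg hphifp).
  assert (Hlt := Mt_lt Lam e phih f hLam hfrange hdec phil hphil hfphil).
  assert (Hge := Mt_ge Lam e phih f hLam hfrange hdec phil hphil hfphil).
  assert (Hphil : Mtilde Lam e f phil = e * phil).
  { rewrite Hge; auto; [|lra]. rewrite hfphil. field. lra. }
  split.
  - intros x y Hx Hy Hxy Hys.
    destruct (Rle_lt_dec y phil) as [l|l].
    + rewrite (Hlt x Hx ltac:(lra)).
      assert (Mtilde Lam e f y = e * y).
      { destruct (Req_dec y phil) as [->|]; auto. apply Hlt; auto; lra. }
      rewrite H. nra.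
    + assert (phil < phifp /\ y <= phifp) as [H1 H2].
      { unfold Rmax in Hys; destruct (Rle_dec phifp phil); lra. }
      rewrite (Hge y Hy ltac:(lra)).
      destruct (Rle_lt_dec phil x) as [l2|l2].
      * rewrite (Hge x Hx l2). assert (f x * x < f y * y) by (apply ginc; auto). nra.
      * rewrite (Hlt x Hx l2).
        assert (f phil * phil < f y * y) by (apply ginc; auto).
        assert (e * phil = Lam / 2 * (f phil * phil)) by (rewrite hfphil; field; lra).
        nra.
  - intros x y Hx Hy Hxy Hys.
    assert (phil <= y /\ phifp <= y) as [H1 H2].
    { unfold Rmax in Hys; destruct (Rle_dec phifp phil); lra. }
    rewrite (Hge y Hy H1), (Hge x Hx ltac:(lra)).
    assert (f x * x < f y * y) by (apply gdec; auto). nra.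
Qed.

Lemma series_info (a : nat -> R) (Hpos : forall n, 0 <= a n) :
  0 <= Series a /\ (forall N, Series a = 0 \/ sum_f_R0 a N <= Series a).
Proof.
  assert (Hinc : forall n, sum_n a n <= sum_n a (S n)).
  { intro n. rewrite sum_Sn. unfold plus; simpl. specialize (Hpos (S n)). lra. }
  assert (Hl := Lim_seq_correct _ (ex_lim_seq_incr _ Hinc)).
  unfold Series. destruct (Lim_seq (sum_n a)) as [r| |] eqn:E; simpl.
  - assert (Hc := is_lim_seq_incr_compare _ _ Hl Hinc).
    split.
    + specialize (Hc 0%nat). rewrite sum_O in Hc. specialize (Hpos 0%nat). lra.
    + intro N. right. rewrite <- sum_n_Reals. apply Hc.
  - split; [lra| intros; left; reflexivity].
  - split; [lra| intros; left; reflexivity].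
Qed.

Lemma rate_prod_ge (c b : R) (hc : 0 < c) (hb : 0 <= b) :
  forall n, 0 < c ^ n <= rate_prod c b n.
Proof.
  induction n as [|m IH].
  - simpl; lra.
  - change (rate_prod c b (S m)) with (rate_prod c b m * (c + INR (S m) * b)).
    change (c ^ S m) with (c * c ^ m).
    assert (0 <= INR (S m)) by apply pos_INR.
    assert (c <= c + INR (S m) * b) by nra.
    split; [nra|].
    rewrite Rmult_comm. apply Rmult_le_compat; lra.
Qed.

Lemma Dprob_nonneg Lam e f phi b (he : 0 < e) (hc : 0 < Lam / 2 * f phi) (hb : 0 < b) :
  0 <= Dprob Lam e f phi b.
Proof.
  unfold Dprob.
  set (a := fun n => e ^ n / rate_prod (Lam / 2 * f phi) b n).
  assert (Hpos : forall n, 0 <= a n).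
  { intro n. unfold a. assert (H := rate_prod_ge _ b hc ltac:(lra) n).
    apply Rle_mult_inv_pos; [apply pow_le; lra| lra]. }
  destruct (series_info a Hpos) as [H0 _].
  destruct H0 as [H0|H0].
  - left; apply Rinv_0_lt_compat; auto.
  - rewrite <- H0, Rinv_0. lra.
Qed.

Lemma Dprob_lower Lam e f phi b (he : 0 < e) (hc : e < Lam / 2 * f phi) (hb : 0 < b) :
  1 - e / (Lam / 2 * f phi) <= Dprob Lam e f phi b.
Proof.
  unfold Dprob.
  set (c := Lam / 2 * f phi) in *.
  set (a := fun n => e ^ n / rate_prod c b n).
  set (q := e / c).
  assert (hc0 : 0 < c) by lra.
  assert (Hq : 0 < q < 1).
  { unfold q; split; [apply Rdiv_lt_0_compat; lra|].
    apply (proj1 (Rdiv_lt_1 e c hc0)); lra. }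
  assert (Hle : forall n, 0 <= a n <= q ^ n).
  { intro n. unfold a, q. assert (H := rate_prod_ge _ b hc0 ltac:(lra) n).
    split. apply Rle_mult_inv_pos; [apply pow_le; lra| lra].
    unfold Rdiv. rewrite Rpow_mult_distr, pow_inv.
    apply Rmult_le_compat_l; [apply pow_le; lra|].
    apply Rinv_le_contravar; lra. }
  assert (Hg := is_series_geom q ltac:(rewrite Rabs_pos_eq; lra)).
  assert (Hex : ex_series a).
  { apply (ex_series_le a (fun n => q ^ n)).
    - intro n. change (norm (a n)) with (Rabs (a n)). rewrite Rabs_pos_eq; apply Hle.
    - eexists; eauto. }
  assert (HS : Series a <= / (1 - q)).
  { rewrite <- (is_series_unique _ _ Hg). apply Series_le; auto. eexists; eauto. }
  assert (HS1 : 1 <= Series a).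
  { assert (Hc := Series_correct _ Hex).
    assert (Hinc : forall n, sum_n a n <= sum_n a (S n)).
    { intro n. rewrite sum_Sn. unfold plus; simpl. specialize (Hle (S n)). lra. }
    assert (H := is_lim_seq_incr_compare _ _ Hc Hinc 0%nat). rewrite sum_O in H.
    unfold a in H. simpl in H. unfold Rdiv in H. rewrite Rmult_1_l, Rinv_1 in H. exact H. }
  assert (/ / (1 - q) <= / Series a) by (apply Rinv_le_contravar; lra).
  rewrite Rinv_inv in H. fold c. lra.
Qed.

Lemma UB (Lam e phih : R) (f : R -> R) (hLam : 0 < Lam) (he : 0 < e)
  (hfrange : forall x, in_I 0 phih x -> 0 < f x <= 1) :
  forall phi b, in_I 0 phih phi -> 0 < b -> Mrev Lam e f phi b <= Mtilde Lam e f phi.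
Proof.
  intros phi b Hp Hb. assert (Hf := hfrange phi Hp). unfold in_I in Hp.
  assert (hc : 0 < Lam / 2 * f phi) by nra.
  unfold Mrev, Mtilde. destruct (Rlt_dec (e / (Lam / 2 * f phi)) 1) as [r|r].
  - apply Rdiv_lt_1 in r; [|lra].
    assert (H := Dprob_lower Lam e f phi b he r Hb).
    assert (Lam / 2 * f phi * (e / (Lam / 2 * f phi)) = e) by (field; lra).
    assert (0 <= Lam / 2 * f phi * phi) by nra.
    set (D := Dprob Lam e f phi b) in *. set (c := Lam / 2 * f phi) in *.
    set (q := e / c) in *. nra.
  - assert (H := Dprob_nonneg Lam e f phi b he hc Hb).
    assert (0 <= Lam / 2 * f phi * phi) by nra. nra.
Qed.

Lemma rate_lim (c : R) (b : nat -> R) (hl : is_lim_seq b 0) :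
  forall n, is_lim_seq (fun k => rate_prod c (b k) n) (c ^ n).
Proof.
  induction n as [|m IH].
  - simpl. apply is_lim_seq_const.
  - replace (c ^ S m) with (c ^ m * (c + INR (S m) * 0)) by (rewrite Rmult_0_r, Rplus_0_r; simpl; ring).
      apply (is_lim_seq_mult' _ _ _ _ IH).
      apply is_lim_seq_plus'; [apply is_lim_seq_const|].
      apply is_lim_seq_mult'; [apply is_lim_seq_const| exact hl].
Qed.

Lemma D_to_0 Lam e f phi (b : nat -> R) (hb : forall n, 0 < b n) (hl : is_lim_seq b 0)
  (he : 0 < e) (hc : 0 < Lam / 2 * f phi) (hce : Lam / 2 * f phi <= e) :
  forall N, (0 < N)%nat -> exists K, forall k, (K <= k)%nat ->
    Dprob Lam e f phi (b k) <= / INR N.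
Proof.
  intros N HN.
  set (c := Lam / 2 * f phi) in *.
  set (a := fun k n => e ^ n / rate_prod c (b k) n).
  assert (Ht : forall n, is_lim_seq (fun k => a k n) (e ^ n * / c ^ n)).
  { intro n. unfold a, Rdiv.
    apply is_lim_seq_mult'; [apply is_lim_seq_const|].
    assert (H := is_lim_seq_inv _ _ (rate_lim c b hl n)).
    apply H. intro E. injection E. apply pow_nonzero. lra. }
  assert (Hs : forall M, is_lim_seq (fun k => sum_f_R0 (a k) M) (sum_f_R0 (fun n => e ^ n * / c ^ n) M)).
  { induction M as [|M IH]; simpl; [apply Ht|].
    apply is_lim_seq_plus'; auto. }
  assert (Hge : forall M, INR M + 1 <= sum_f_R0 (fun n => e ^ n * / c ^ n) M).
  { assert (H1 : forall n, 1 <= e ^ n * / c ^ n).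
    { intro n. assert (0 < c ^ n) by (apply pow_lt; lra).
      assert (c ^ n <= e ^ n) by (apply pow_incr; lra).
      apply (Rmult_le_reg_r (c ^ n)); auto. rewrite Rmult_assoc, Rinv_l; lra. }
    induction M as [|M IH].
    - specialize (H1 0%nat). simpl in *. lra.
    - specialize (H1 (S M)).
      change (sum_f_R0 (fun n => e ^ n * / c ^ n) (S M)) with
        (sum_f_R0 (fun n => e ^ n * / c ^ n) M + e ^ (S M) * / c ^ (S M)).
      rewrite S_INR. lra. }
  assert (HsN := Hs N). apply is_lim_seq_spec in HsN. specialize (HsN (mkposreal 1 Rlt_0_1)).
  destruct HsN as [K HK]. exists K. intros k Hk. specialize (HK k Hk). simpl in HK.
  specialize (Hge N).
  assert (Hpart : INR N < sum_f_R0 (a k) N).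
  { apply Rabs_def2 in HK. lra. }
  unfold Dprob. fold c.
  assert (Hpos : forall n, 0 <= a k n).
  { intro n. unfold a. assert (H := rate_prod_ge _ (b k) hc ltac:(specialize (hb k); lra) n).
    apply Rle_mult_inv_pos; [apply pow_le; lra| lra]. }
  destruct (series_info (a k) Hpos) as [_ HS].
  assert (0 < INR N) by (apply lt_0_INR; auto).
  change (fun n => e ^ n / rate_prod c (b k) n) with (a k).
  destruct (HS N) as [E|E].
  - rewrite E, Rinv_0. left; apply Rinv_0_lt_compat; lra.
  - apply Rinv_le_contravar; lra.
Qed.

Theorem theorem1
  (Lam e phih : R) (f : R -> R)
  (hLam : 0 < Lam) (he : 0 < e) (hphih : 0 < phih)
  (hfrange : forall x, in_I 0 phih x -> 0 < f x <= 1)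
  (hconc : strictly_concave_on f 0 phih)
  (hdec : strictly_decreasing_on f 0 phih)
  (hdiff : differentiable_on f 0 phih)
  (hf0 : f 0 = 1)
  (phil : R) (hphil : in_I 0 phih phil) (hfphil : f phil = 2 * e / Lam)
  (phifp : R) (hphifp : is_argmax (fun phi => f phi * phi) 0 phih phifp) :
  let phistar := Rmax phifp phil in
  (in_I 0 phih phistar /\
   forall phi, in_I 0 phih phi -> phi <> phistar ->
     Mtilde Lam e f phi < Mtilde Lam e f phistar) /\
  (forall (beta : nat -> R) (phis : nat -> R),
     (forall n, 0 < beta n) ->
     (forall n, beta (S n) <= beta n) ->
     is_lim_seq beta 0 ->
     (forall n, is_argmax (fun phi => Mrev Lam e f phi (beta n)) 0 phih (phis n)) ->
     exists sigma : nat -> nat,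
       (forall k, (sigma k < sigma (S k))%nat) /\
       is_lim_seq (fun k => phis (sigma k)) phistar).
Proof.
  intros phistar.
  destruct (unimodal Lam e phih f hLam he hphih hfrange hconc hdec phil hphil hfphil
              phifp hphifp) as [U1 U2].
  fold phistar in U1, U2.
  assert (Hfp := proj1 hphifp).
  assert (Hps : in_I 0 phih phistar).
  { unfold phistar, Rmax, in_I in *. destruct (Rle_dec phifp phil); lra. }
  assert (Hlps : phil <= phistar) by (unfold phistar; apply Rmax_r).
  split.
  { split; auto. intros phi Hp Hne.
    destruct (Rlt_le_dec phi phistar) as [l|l].
    - apply U1; auto; lra.
    - apply U2; auto; lra. }
  intros beta phis hb hmono hl hmax. exists (fun k => k). split; [intro; lia|].
  apply is_lim_seq_spec. intro eps.
  set (Mt := Mtilde Lam e f) in *.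
  assert (HL : exists d1, 0 < d1 /\ forall phi, in_I 0 phih phi -> phi <= phistar - eps ->
            Mt phi <= Mt phistar - d1).
  { destruct (Rle_lt_dec 0 (phistar - eps)) as [l|l].
    - assert (Hp1 : in_I 0 phih (phistar - eps)).
      { unfold in_I in *. destruct eps; simpl in *; lra. }
      assert (Hlt : Mt (phistar - eps) < Mt phistar).
      { apply U1; auto; destruct eps; simpl; lra. }
      exists (Mt phistar - Mt (phistar - eps)). split; [lra|].
      intros phi Hp Hle. destruct Hle as [Hle|Heq]; [|rewrite Heq; lra].
      assert (Mt phi < Mt (phistar - eps)) by (apply U1; auto; destruct eps; simpl in *; lra). lra.
    - exists 1. split; [lra|]. intros phi Hp Hle. unfold in_I in Hp. lra. }
  assert (HR : exists d2, 0 < d2 /\ forall phi, in_I 0 phih phi -> phistar + eps <= phi ->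
            Mt phi <= Mt phistar - d2).
  { destruct (Rle_lt_dec (phistar + eps) phih) as [l|l].
    - assert (Hp1 : in_I 0 phih (phistar + eps)).
      { unfold in_I in *. destruct eps; simpl in *; lra. }
      assert (Hlt : Mt (phistar + eps) < Mt phistar).
      { apply U2; auto; destruct eps; simpl; lra. }
      exists (Mt phistar - Mt (phistar + eps)). split; [lra|].
      intros phi Hp Hle. destruct Hle as [Hle|Heq]; [|rewrite Heq; lra].
      assert (Mt phi < Mt (phistar + eps)) by (apply U2; auto; destruct eps; simpl in *; lra). lra.
    - exists 1. split; [lra|]. intros phi Hp Hle. unfold in_I in Hp. lra. }
  destruct HL as [d1 [Hd1 HL]]. destruct HR as [d2 [Hd2 HR]].
  set (delta := Rmin d1 d2).
  assert (Hdel : 0 < delta) by (unfold delta; apply Rmin_pos; auto).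
  assert (Hd1' : delta <= d1) by apply Rmin_l.
  assert (Hd2' : delta <= d2) by apply Rmin_r.
  set (cs := Lam / 2 * f phistar).
  assert (Hfs := hfrange phistar Hps).
  assert (Hcs : 0 < cs) by (unfold cs; nra).
  assert (Hcse : cs <= e).
  { assert (f phistar <= f phil).
    { destruct (Req_dec phil phistar) as [<-|]; [lra|]. left; apply hdec; auto; lra. }
    unfold cs. rewrite hfphil in H. assert (Lam / 2 * (2 * e / Lam) = e) by (field; lra). nra. }
  assert (HMs : Mt phistar = cs * phistar).
  { unfold Mt, cs. apply (Mt_ge Lam e phih f hLam hfrange hdec phil hphil hfphil); auto. }
  set (K := cs * phistar).
  assert (HK : 0 <= K) by (unfold K, in_I in *; nra).
  destruct (archimed_cor1 (delta / (K + 1))) as [N [HN HN0]].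
  { apply Rdiv_lt_0_compat; lra. }
  destruct (D_to_0 Lam e f phistar beta hb hl he Hcs Hcse N HN0) as [K0 HK0].
  exists K0. intros n Hn.
  assert (HD := HK0 n Hn).
  assert (HD0 := Dprob_nonneg Lam e f phistar (beta n) he Hcs (hb n)).
  assert (HMr : Mt phistar - delta < Mrev Lam e f phistar (beta n)).
  { unfold Mrev. fold cs. rewrite HMs. fold K.
    set (D := Dprob Lam e f phistar (beta n)) in *.
    assert (K * D <= K * / INR N) by (apply Rmult_le_compat_l; auto).
    assert (K * / INR N <= K * (delta / (K + 1))) by (apply Rmult_le_compat_l; lra).
    assert (K * (delta / (K + 1)) < delta).
    { apply (Rmult_lt_reg_r (K + 1)); [lra|]. unfold Rdiv.
      rewrite Rmult_assoc, (Rmult_assoc delta), Rinv_l; lra. }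
    replace (cs * phistar * (1 - D)) with (K - K * D) by (unfold K; ring). lra. }
  destruct (hmax n) as [Hpn Hmaxn].
  assert (H1 := Hmaxn phistar Hps).
  assert (H2 := UB Lam e phih f hLam he hfrange (phis n) (beta n) Hpn (hb n)).
  fold Mt in H2.
  destruct (Rlt_le_dec (Rabs (phis n - phistar)) eps) as [l|l]; [exact l|exfalso].
  assert (Mt (phis n) <= Mt phistar - delta).
  { unfold Rabs in l. destruct (Rcase_abs (phis n - phistar)).
    - assert (Mt (phis n) <= Mt phistar - d1) by (apply HL; auto; lra). lra.
    - assert (Mt (phis n) <= Mt phistar - d2) by (apply HR; auto; lra). lra. }
  lra.
Qed.
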